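(* Let $K=(C,\langle Q_i,1\le i\le k\rangle)$ and $K'=(C',\langle Q'_j,1\le j\le l\rangle)$ be two non-degenerate CMIs in pure form, with $\mathrm{can}(K)=(C,\langle\mathbb I_K,\mathbb I_K,P_i,1\le i\le t\rangle)$ and $\mathrm{can}(K')=(C',\langle\mathbb I_{K'},\mathbb I_{K'},P'_j,1\le j\le s\rangle)$. If $K\sim K'$, then $\langle P_i,1\le i\le t\rangle=\langle P'_j,1\le j\le s\rangle$.
   Context: Setting: $X_1,\dots,X_n$ jointly distributed discrete random variables with $H(X_i)<\infty$; distribution unspecified. $X_\alpha=(X_i,i\in\alpha)$, $X_\emptyset$ constant. A CMI is $K=(C,\langle Q_1,\dots,Q_k\rangle)$, $k\ge0$, $C\subseteq\{1,\dots,n\}$, $\langle\cdot\rangle$ an unordered multiset of subsets; valid (for a given distribution) if $\sum_iH(X_{Q_i}|X_C)-H(X_{Q_1},\dots,X_{Q_k}|X_C)=0$. Empty members may be deleted; equality of collections is multiset equality. $K\sim K'$: for every joint distribution both valid or both invalid. Degenerate = valid for every distribution, written $(\cdot,\langle\ \rangle)$. Pure form: all $Q_i\ne\emptyset$, $Q_i\cap C=\emptyset$. For pure $K$: $\mathbb I_K$ = set of indices lying in at least two members of the collection if $k\ge2$, else $\emptyset$; $P_1,\dots,P_t$ the nonempty sets among $Q_i\setminus\mathbb I_K$; $\mathrm{can}(K)=(\cdot,\langle\ \rangle)$ if $k\le1$, $(C,\langle\mathbb I_K,\mathbb I_K\rangle)$ if $k\ge2,\mathbb I_K\ne\emptyset,t\le1$,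 $(C,\langle P_1..P_t\rangle)$ if $k\ge2,\mathbb I_K=\emptyset$, $(C,\langle\mathbb I_K,\mathbb I_K,P_1..P_t\rangle)$ if $k\ge2,\mathbb I_K\ne\emptyset,t\ge2$. The general-form notation $(C,\langle\mathbb I_K,\mathbb I_K,P_i,1\le i\le t\rangle)$ means: the two copies of $\mathbb I_K$ are omitted when $\mathbb I_K=\emptyset$, and in this notation $t=0$ when $\mathrm{can}(K)=(C,\langle\mathbb I_K,\mathbb I_K\rangle)$ (so $t\ne1$). *)

(* Defs.v *)
From HB Require Import structures.
From mathcomp Require Import all_boot all_order all_algebra.
From mathcomp Require Import all_classical all_reals.
From mathcomp Require Import ereal esum exp.
Set Implicit Arguments. Unset Strict Implicit. Unset Printing Implicit Defensive.
Import Order.TTheory GRing.Theory Num.Theory.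
Local Open Scope ring_scope.

(* Random variables X_0, ..., X_{n-1} (indices 'I_n), each taking values in a
   countable alphabet, encoded w.l.o.g. as nat.  A joint distribution is a pmf
   on outcomes  'I_n -> nat. *)
Definition outcome (n : nat) := {ffun 'I_n -> nat}.

(* realisation of X_A : coordinates outside A are forgotten (set to 0) *)
Definition proj n (A : {set 'I_n}) (x : outcome n) : outcome n :=
  [ffun i => if i \in A then x i else 0%N].

Section Entropy.
Variables (R : realType) (n : nat).
Implicit Types (p : outcome n -> R) (A C : {set 'I_n}).

Definition marg p A (y : outcome n) : \bar R :=
  \esum_(x in ([set x | proj A x = y])%classic) (p x)%:E.

(* Shannon entropy H(X_A) (natural log), possibly +oo; ln 0 = 0. *)
Definition ent p A : \bar R :=
  \esum_(y in range (proj A))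
     (- (fine (marg p A y)) * ln (fine (marg p A y)))%:E.

Definition is_dist p : Prop :=
  [/\ forall x, 0 <= p x,
      \esum_(x in (@classical_sets.setT (outcome n))) (p x)%:E = 1%E
    & forall i : 'I_n, (ent p [set i] < +oo)%E].

Definition cent p A C : \bar R := (ent p (A :|: C) - ent p C)%E.
End Entropy.

(* A CMI (C, <Q_1,...,Q_k>): the multiset is a seq, compared up to perm_eq. *)
Definition CMI n := ({set 'I_n} * seq {set 'I_n})%type.

(* valid: sum_i H(X_Qi|X_C) - H(X_Q1,...,X_Qk|X_C) = 0; the joint variable
   (X_Q1,...,X_Qk) is X_{Q1 u ... u Qk}. *)
Definition valid (R : realType) n (p : outcome n -> R) (K : CMI n) : Prop :=
  ((\sum_(Q <- K.2) cent p Q K.1) - cent p (\bigcup_(Q <- K.2) Q) K.1 = 0)%E.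

Definition cmi_equiv (R : realType) n (K K' : CMI n) : Prop :=
  forall p : outcome n -> R, is_dist p -> (valid p K <-> valid p K').

Definition degenerate (R : realType) n (K : CMI n) : Prop :=
  forall p : outcome n -> R, is_dist p -> valid p K.

Definition pure_form n (K : CMI n) : Prop :=
  forall Q, Q \in K.2 -> Q != finset.set0 /\ Q :&: K.1 = finset.set0.

Definition IK n (K : CMI n) : {set 'I_n} :=
  if (1 < size K.2)%N then [set x : 'I_n | (1 < count (fun Q : {set 'I_n} => x \in Q) K.2)%N]
  else finset.set0.

Definition Ps n (K : CMI n) : seq {set 'I_n} :=
  [seq Q :\: IK K | Q <- K.2 & Q :\: IK K != finset.set0].

(* The P-part of can(K) in the general-form notation
   (C, <I_K, I_K, P_i, 1<=i<=t>): empty when can(K) is degenerate or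
   equals (C, <I_K, I_K>) (i.e. I_K nonempty and t <= 1). *)
Definition canP n (K : CMI n) : seq {set 'I_n} :=
  if (size K.2 <= 1)%N then [::]
  else if (IK K != finset.set0) && (size (Ps K) <= 1)%N then [::]
  else Ps K.

(* Main.v *)
Require Import Defs.
From mathcomp Require Import all_boot all_order all_algebra.
From mathcomp Require Import all_classical all_reals.
From HB Require Import structures.
From mathcomp Require Import ereal esum exp.
From mathcomp Require Import lra zify.
Set Implicit Arguments. Unset Strict Implicit. Unset Printing Implicit Defensive.
Import Order.TTheory GRing.Theory Num.Theory.
Local Open Scope ring_scope.
Local Open Scope classical_set_scope.

Section Dist.
Variables (R : realType) (n : nat).

Lemma esum_supp1 (T : choiceType) (D : set T) (b : T) (w : R) : 0 <= w ->
  \esum_(x in D) ((if x == b then w else 0)%:E) = ((if b \in D then w else 0)%:E).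
Proof.
move=> w0.
rewrite (esumID [set b]); last by move=> x _; case: ifP; rewrite lee_fin.
rewrite [X in (_ + X)%E]esum1 ?adde0; last first.
  by move=> x [_ xb]; rewrite ifF //; apply/negbTE/eqP.
case: (boolP (b \in D)) => bD.
  have -> : D `&` [set b] = [set b].
    apply/seteqP; split=> [x [] //| x /= ->]; split=> //; by rewrite -in_setE.
  transitivity ((if b == b then w else 0)%:E); last by rewrite eqxx.
  by apply: esum_set1; rewrite eqxx lee_fin.
have -> : D `&` [set b] = classical_sets.set0.
  apply/seteqP; split=> [x [] Dx /= xb| x //]; subst x.
  by move/negP: bD; rewrite in_setE.
by rewrite esum_set0.
Qed.

Lemma half2 : 2^-1 + 2^-1 = 1 :> R.
Proof. lra. Qed.

Definition bvec (S : {set 'I_n}) (c : nat) : outcome n :=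
  [ffun i => if i \in S then c else 0%N].

Definition pS (S : {set 'I_n}) (x : outcome n) : R :=
  (if x == bvec S 0 then 2^-1 else 0) + (if x == bvec S 1 then 2^-1 else 0).

Lemma half_ge0 : 0 <= 2^-1 :> R. Proof. lra. Qed.

Lemma esum_pS S (D : set (outcome n)) :
  \esum_(x in D) (pS S x)%:E =
  ((if bvec S 0 \in D then 2^-1 else 0) + (if bvec S 1 \in D then 2^-1 else 0))%:E.
Proof.
rewrite /pS; under eq_esum do rewrite EFinD.
rewrite esumD; first by rewrite !esum_supp1 ?half_ge0 // EFinD.
  by move=> x _; case: ifP; rewrite lee_fin ?half_ge0.
by move=> x _; case: ifP; rewrite lee_fin ?half_ge0.
Qed.

Lemma margE S A y : marg (pS S) A y =
  ((if Defs.proj A (bvec S 0) == y then 2^-1 else 0) +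
   (if Defs.proj A (bvec S 1) == y then 2^-1 else 0))%:E.
Proof.
rewrite /marg esum_pS.
have mE c : (bvec S c \in [set x | Defs.proj A x = y]) = (Defs.proj A (bvec S c) == y).
  by apply/idP/eqP; rewrite in_setE.
by rewrite !mE.
Qed.

Definition hh : R := - 2^-1 * ln (2^-1).

Lemma hh_gt0 : 0 < hh.
Proof.
rewrite /hh mulNr oppr_gt0 pmulr_rlt0; last lra.
by apply: ln_lt0; apply/andP; split; lra.
Qed.

Lemma projbE S A :
  (Defs.proj A (bvec S 0) == Defs.proj A (bvec S 1)) = (A :&: S == finset.set0).
Proof.
apply/eqP/eqP.
  move=> /ffunP e; apply/setP => i; rewrite inE finset.in_set0; move: (e i).
  by rewrite !ffunE; case: (i \in A); case: (i \in S).
move=> e; apply/ffunP => i; rewrite !ffunE.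
have : (i \in A :&: S) = false by rewrite e finset.in_set0.
by rewrite inE; case: (i \in A); case: (i \in S).
Qed.

Lemma entE S A : ent (pS S) A =
  (if A :&: S == finset.set0 then 0 else hh + hh)%:E.
Proof.
rewrite /ent; under eq_esum do rewrite margE /=.
rewrite -projbE.
set a := Defs.proj A (bvec S 0); set b := Defs.proj A (bvec S 1).
case: (boolP (a == b)) => [/eqP ab|ab].
  apply: esum1 => y _; rewrite -ab; case: (a == y); last by rewrite addr0 oppr0 mul0r.
  by rewrite half2 ln1 mulr0.
transitivity (\esum_(y in range (Defs.proj A))
   ((if y == a then hh else 0)%:E + (if y == b then hh else 0)%:E))%E.
  apply: eq_esum => y _; rewrite -EFinD; congr EFin.
  rewrite ![_ == y]eq_sym.
  case: (boolP (y == a)) => [/eqP ya|ya].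
    by rewrite ya !ifN ?addr0 // /hh.
  case: (boolP (y == b)) => [/eqP yb|yb].
    by rewrite !add0r /hh.
  by rewrite !addr0 oppr0 mul0r.
rewrite esumD; last 2 first.
- by move=> x _; case: ifP; rewrite lee_fin // ltW // hh_gt0.
- by move=> x _; case: ifP; rewrite lee_fin // ltW // hh_gt0.
rewrite !esum_supp1; try exact: ltW hh_gt0.
have ra c : (Defs.proj A (bvec S c) \in range (Defs.proj A)).
  by rewrite in_setE; exists (bvec S c).
by rewrite !ra EFinD.
Qed.


Lemma is_dist_pS S : is_dist (pS S).
Proof.
split.
- move=> x; rewrite /pS; apply: addr_ge0; case: ifP => _; rewrite ?half_ge0 //.
- have hT c : bvec S c \in [set: outcome n] by rewrite in_setE.
  by rewrite esum_pS !hT half2.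
- by move=> i; rewrite entE; case: ifP => _; exact: ltry.
Qed.

Lemma sum_ind (s : seq {set 'I_n}) (P : pred {set 'I_n}) (c : R) :
  \sum_(Q <- s) (if P Q then 0 else c) = (count (fun Q => ~~ P Q) s)%:R * c.
Proof.
elim: s => [|Q s IH]; first by rewrite big_nil mul0r.
rewrite big_cons IH /= natrD mulrDl; case: (P Q); by rewrite ?mul1r ?mul0r ?add0r.
Qed.

Lemma bigcup_meet (s : seq {set 'I_n}) S :
  ((\bigcup_(Q <- s) Q) :&: S == finset.set0) =
  ~~ has (fun Q => Q :&: S != finset.set0) s.
Proof.
elim: s => [|Q s IH]; first by rewrite big_nil finset.set0I eqxx.
by rewrite big_cons finset.setIUl finset.setU_eq0 IH /= negb_or negbK.
Qed.

Lemma EFin0 (x : R) : (x%:E = 0%E) <-> x = 0.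
Proof. by split => [[]|->]. Qed.

Lemma validE S (K : CMI n) : valid (pS S) K <->
  ((K.1 :&: S != finset.set0) ||
   (count (fun Q => Q :&: S != finset.set0) K.2 <= 1)%N).
Proof.
rewrite /valid /cent.
rewrite (eq_bigr (fun Q => ((if (Q :|: K.1) :&: S == finset.set0 then 0 else hh + hh) -
   (if K.1 :&: S == finset.set0 then 0 else hh + hh))%:E)); last first.
  by move=> Q _; rewrite !entE EFinB.
rewrite sumEFin !entE -!EFinB.
apply: iff_trans (EFin0 _) _.
case: (eqVneq (K.1 :&: S) finset.set0) => CS /=.
  have XE X : ((X :|: K.1) :&: S == finset.set0) = (X :&: S == finset.set0).
    by rewrite finset.setIUl CS finset.setU0.
  rewrite (eq_bigr (fun Q => if Q :&: S == finset.set0 then 0 else hh + hh)); last first.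
    by move=> Q _; rewrite XE subr0.
  rewrite XE subr0 sum_ind bigcup_meet has_count.
  have hp := hh_gt0.
  case: (count _ _) => [|[|c]] /=.
  - by rewrite mul0r subr0.
  - by rewrite mul1r subrr.
  split => // H; exfalso.
  have : 2%:R <= c.+2%:R :> R by rewrite ler_nat.
  move: H; rewrite /=; nra.
have XE X : ((X :|: K.1) :&: S == finset.set0) = false.
  by rewrite finset.setIUl finset.setU_eq0 (negbTE CS) andbF.
rewrite XE subrr big1 ?subr0 //.
by move=> Q _; rewrite XE subrr.
Qed.

End Dist.


Local Close Scope classical_set_scope.
Local Close Scope ring_scope.

Definition goodE n (E : 'I_n -> 'I_n -> bool) x :=
  ~~ E x x && [exists z, ~~ E z z && E x z].
Definition blkE n (E : 'I_n -> 'I_n -> bool) x := [set y | goodE E y && ~~ E x y].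
Definition TE n (E : 'I_n -> 'I_n -> bool) := [exists x, goodE E x].

Section Comb.
Variables (n : nat) (K : CMI n).
Hypothesis pK : pure_form K.

Definition EK (x y : 'I_n) : bool :=
  ~~ ((K.1 :&: [set x; y] != finset.set0) ||
      (count (fun Q => Q :&: [set x; y] != finset.set0) K.2 <= 1)%N).

Definition cnt (x : 'I_n) := count (fun Q : {set 'I_n} => x \in Q) K.2.

Lemma pure_notC Q x : Q \in K.2 -> x \in Q -> x \notin K.1.
Proof.
move=> /pK [_ e] xQ; apply/negP => xC.
have : x \in Q :&: K.1 by rewrite inE xQ xC.
by rewrite e finset.in_set0.
Qed.

Lemma cnt_gt0 x : (0 < cnt x)%N -> exists2 Q, Q \in K.2 & x \in Q.
Proof. by rewrite /cnt -has_count => /hasP. Qed.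

Lemma cnt_notC x : (0 < cnt x)%N -> x \notin K.1.
Proof. by case/cnt_gt0 => Q; apply: pure_notC. Qed.

Lemma meet2 (A : {set 'I_n}) x y :
  (A :&: [set x; y] != finset.set0) = (x \in A) || (y \in A).
Proof.
apply/set0Pn/orP => [[z]|[h|h]].
- by rewrite !inE => /andP[h /orP[] /eqP <-]; [left|right].
- by exists x; rewrite !inE h eqxx.
- by exists y; rewrite !inE h eqxx orbT.
Qed.

Lemma EK_E x y : EK x y = [&& x \notin K.1, y \notin K.1 &
   (1 < count (fun Q : {set 'I_n} => (x \in Q) || (y \in Q)) K.2)%N].
Proof.
rewrite /EK meet2.
have -> : count (fun Q => Q :&: [set x; y] != finset.set0) K.2 =
          count (fun Q : {set 'I_n} => (x \in Q) || (y \in Q)) K.2.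
  by apply: eq_count => Q; rewrite meet2.
by case: (x \in K.1); case: (y \in K.1); rewrite //= ltnNge.
Qed.

Lemma EK_sym x y : EK x y = EK y x.
Proof.
rewrite !EK_E andbA [(x \notin _) && _]andbC -andbA.
by congr [&& _, _ & (1 < _)%N]; apply: eq_count => Q; rewrite orbC.
Qed.

Lemma EKxx x : EK x x = (1 < cnt x)%N.
Proof.
rewrite EK_E.
have -> : count (fun Q : {set 'I_n} => (x \in Q) || (x \in Q)) K.2 = cnt x.
  by apply: eq_count => Q; rewrite orbb.
case: (ltnP 0 (cnt x)) => h; first by rewrite (cnt_notC h).
by rewrite ltnNge (leq_trans h) // !andbF.
Qed.

Lemma notI_EK x y : (cnt x <= 1)%N -> (cnt y <= 1)%N ->
  EK x y = [&& cnt x == 1%N, cnt y == 1%N &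
     count (fun Q : {set 'I_n} => (x \in Q) && (y \in Q)) K.2 == 0%N].
Proof.
move=> hx hy; rewrite EK_E.
have U : (count (fun Q : {set 'I_n} => (x \in Q) || (y \in Q)) K.2 +
          count (fun Q : {set 'I_n} => (x \in Q) && (y \in Q)) K.2 = cnt x + cnt y)%N.
  exact: count_predUI.
set cu := count (fun Q : {set 'I_n} => (x \in Q) || (y \in Q)) K.2 in U *.
set ci := count (fun Q : {set 'I_n} => (x \in Q) && (y \in Q)) K.2 in U *.
case: (boolP (cnt x == 1%N)) => /eqP cx; case: (boolP (cnt y == 1%N)) => /eqP cy /=.
- rewrite (cnt_notC (_ : 0 < cnt x)%N) ?cx // (cnt_notC (_ : 0 < cnt y)%N) ?cy //=.
  by apply/idP/idP => ?; lia.
all: suff h : (cu <= 1)%N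
  by rewrite ltnNge h !andbF.
all: lia.
Qed.

Lemma owner_uniq x Q1 Q2 : cnt x = 1%N -> Q1 \in K.2 -> Q2 \in K.2 ->
  x \in Q1 -> x \in Q2 -> Q1 = Q2.
Proof.
move=> c1 h1 h2 x1 x2; apply/eqP; apply/negPn/negP => ne.
have le : (count (fun Q => (Q == Q1) || (Q == Q2)) K.2 <= cnt x)%N.
  by apply: sub_count => Q /orP[] /eqP ->.
have U : (count (fun Q => (Q == Q1) || (Q == Q2)) K.2 +
          count (fun Q => (Q == Q1) && (Q == Q2)) K.2 =
          count_mem Q1 K.2 + count_mem Q2 K.2)%N by exact: count_predUI.
have z : count (fun Q => (Q == Q1) && (Q == Q2)) K.2 = 0%N.
  by apply/eqP; rewrite -leqn0 leqNgt -has_count; apply/negP => /hasP[Q _ /andP[/eqP -> /eqP e]]; rewrite e eqxx in ne.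
have p1 : (0 < count_mem Q1 K.2)%N by rewrite -has_count has_pred1.
have p2 : (0 < count_mem Q2 K.2)%N by rewrite -has_count has_pred1.
lia.
Qed.

Lemma IKE x : (x \in IK K) = (1 < cnt x)%N.
Proof.
rewrite /IK; case: ifP => h; first by rewrite inE.
rewrite finset.in_set0; apply/esym/negbTE; rewrite -leqNgt.
by rewrite (leq_trans (count_size _ _)) // leqNgt h.
Qed.

Lemma PsP B : reflect (exists2 Q, Q \in K.2 & B = Q :\: IK K /\ Q :\: IK K != finset.set0)
  (B \in Ps K).
Proof.
rewrite /Ps; apply: (iffP mapP) => [[Q]|[Q qQ [eB ne]]].
  by rewrite mem_filter => /andP[ne qQ] eB; exists Q.
by exists Q => //; rewrite mem_filter ne qQ.
Qed.

Lemma memPs_cnt Q x : Q \in K.2 -> x \in Q :\: IK K -> cnt x = 1%N.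
Proof.
move=> qQ; rewrite inE IKE -leqNgt => /andP[h xQ].
have : (0 < cnt x)%N by rewrite /cnt -has_count; apply/hasP; exists Q.
lia.
Qed.

Lemma QinPs Q x : Q \in K.2 -> x \in Q -> cnt x = 1%N -> Q :\: IK K \in Ps K.
Proof.
move=> qQ xQ cx; apply/PsP; exists Q => //; split => //.
by apply/set0Pn; exists x; rewrite inE IKE cx xQ.
Qed.

Lemma L1 B1 B2 x z : B1 \in Ps K -> B2 \in Ps K -> B1 != B2 -> x \in B1 -> z \in B2 ->
  [&& EK x z, ~~ EK x x & ~~ EK z z].
Proof.
case/PsP => Q1 q1 [-> _]; case/PsP => Q2 q2 [-> _] ne x1 z2.
have cx := memPs_cnt q1 x1; have cz := memPs_cnt q2 z2.
rewrite !EKxx cx cz /= andbT notI_EK ?cx ?cz //=.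
rewrite -leqn0 leqNgt -has_count; apply/negP => /hasP[Q qQ /andP[xQ zQ]].
move: x1 z2; rewrite !inE => /andP[_ xQ1] /andP[_ zQ2].
have e1 := owner_uniq cx qQ q1 xQ xQ1; have e2 := owner_uniq cz qQ q2 zQ zQ2.
by move: ne; rewrite -e1 -e2 eqxx.
Qed.

Lemma L2 x : goodE EK x -> exists2 Q, Q \in K.2 &
  [/\ x \in Q, cnt x = 1%N & blkE EK x = Q :\: IK K].
Proof.
move=> /andP[nxx /existsP[z /andP[nzz xz]]].
rewrite EKxx -leqNgt in nxx; rewrite EKxx -leqNgt in nzz; rewrite (notI_EK nxx nzz) in xz.
case/and3P: xz => /eqP cx /eqP cz /eqP c0.
have : (0 < cnt x)%N by rewrite cx.
case/cnt_gt0 => Q qQ xQ; exists Q => //; split => //.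
apply/setP => y; rewrite !inE IKE; apply/idP/idP.
- case/andP => /andP[nyy /existsP[w /andP[nww yw]]] nxy.
  rewrite EKxx -leqNgt in nyy; rewrite EKxx -leqNgt in nww; rewrite (notI_EK nyy nww) in yw.
  case/and3P: yw => /eqP cy _ _.
  rewrite notI_EK ?cx ?cy // eqxx /= in nxy.
  rewrite -lt0n -has_count in nxy; case/hasP: nxy => Q' q' /andP[xQ' yQ'].
  by rewrite -(owner_uniq cx q' qQ xQ' xQ) yQ' cy andbT.
- case/andP => nyy yQ; rewrite -leqNgt in nyy.
  have : (0 < cnt y)%N by rewrite /cnt -has_count; apply/hasP; exists Q.
  move=> py; have cy : cnt y = 1%N by lia.
  rewrite /goodE EKxx cy /= notI_EK ?cx ?cy //=.
  apply/andP; split.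
    apply/existsP; exists z; rewrite EKxx cz /= notI_EK ?cy ?cz // eqxx /=.
    rewrite -leqn0 leqNgt -has_count; apply/negP => /hasP[Q' q' /andP[yQ' zQ']].
    have e := owner_uniq cy q' qQ yQ' yQ.
    have : (0 < count (fun Q : {set 'I_n} => (x \in Q) && (z \in Q)) K.2)%N.
      by rewrite -has_count; apply/hasP; exists Q => //; rewrite xQ -e zQ'.
    by rewrite c0.
  by rewrite -lt0n -has_count; apply/hasP; exists Q => //; rewrite xQ yQ.
Qed.

Lemma two_mem (T : eqType) (s : seq T) a b : a \in s -> b \in s -> a != b -> (1 < size s)%N.
Proof. by case: s => [|c [|d s]] //=; rewrite !inE => /eqP-> /eqP->; rewrite eqxx. Qed.

Lemma other (T : eqType) (s : seq T) B : uniq s -> (1 < size s)%N -> B \in s ->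
  exists2 B', B' \in s & B' != B.
Proof.
move=> u h hB; case: (boolP (has (fun B' => B' != B) s)) => [/hasP[B' ? ?]|]; first by exists B'.
rewrite -all_predC => /allP al.
have : (size s <= size [:: B])%N.
  by apply: uniq_leq_size u _ => y ys; have := al y ys; rewrite /= negbK inE.
by rewrite /= leqNgt h.
Qed.

Lemma uniq_Ps : uniq (Ps K).
Proof.
apply: count_mem_uniq => B; case: (boolP (B \in Ps K)) => hB; last by apply/count_memPn.
have pos : (0 < count_mem B (Ps K))%N by rewrite -has_count has_pred1.
case/PsP: (hB) => Q qQ [eB ne]; case/set0Pn: ne => x xB.
have cx := memPs_cnt qQ xB.
have : (count_mem B (Ps K) <= cnt x)%N.
  rewrite /Ps count_map count_filter; apply: sub_count => Q' /= /andP[/eqP eQ _].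
  by move: xB; rewrite -eB -eQ inE => /andP[].
lia.
Qed.

Lemma canP_E : canP K = if (1 < size (Ps K))%N then Ps K else [::].
Proof.
rewrite /canP.
have sz : (size (Ps K) <= size K.2)%N by rewrite size_map size_filter count_size.
case: (leqP (size K.2) 1) => h1; first by rewrite ifN // -leqNgt (leq_trans sz h1).
case: ifP => /= h2; first by case/andP: h2 => _ h; rewrite ifN // -leqNgt.
case: (eqVneq (IK K) finset.set0) => hI.
  suff -> : size (Ps K) = size K.2 by rewrite h1.
  rewrite /Ps hI size_map size_filter; apply/eqP; rewrite -all_count.
  by apply/allP => Q qQ; rewrite finset.setD0; have [] := pK qQ.
by rewrite ifT //; move: h2; rewrite hI /= => /negbT; rewrite -ltnNge.
Qed.

Lemma TE_size : TE EK = (1 < size (Ps K))%N.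
Proof.
apply/idP/idP.
- case/existsP => x gx; have gx' := gx.
  case/andP: gx => nxx /existsP[z /andP[nzz xz]].
  have gz : goodE EK z.
    by rewrite /goodE nzz /=; apply/existsP; exists x; rewrite nxx EK_sym xz.
  have [Q1 q1 [x1 cx e1]] := L2 gx'; have [Q2 q2 [z2 cz e2]] := L2 gz.
  apply: (@two_mem _ _ (blkE EK x) (blkE EK z)).
  + by rewrite e1; apply: QinPs x1 cx.
  + by rewrite e2; apply: QinPs z2 cz.
  + apply/negP => /eqP e.
    have : x \in blkE EK x by rewrite inE gx' nxx.
    by rewrite e inE EK_sym xz andbF.
- move=> h; have u := uniq_Ps.
  case E: (Ps K) h u => [|B1 [|B2 s]] //= _ /andP[nB _].
  have B1P : B1 \in Ps K by rewrite E inE eqxx.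
  have B2P : B2 \in Ps K by rewrite E !inE eqxx orbT.
  have nB12 : B1 != B2 by apply: contra nB => /eqP ->; rewrite inE eqxx.
  case/PsP: (B1P) => Q1 _ [eB1 ne1]; case/set0Pn: ne1; rewrite -eB1 => x x1.
  case/PsP: (B2P) => Q2 _ [eB2 ne2]; case/set0Pn: ne2; rewrite -eB2 => z z2.
  case/and3P: (L1 B1P B2P nB12 x1 z2) => xz nxx nzz.
  by apply/existsP; exists x; rewrite /goodE nxx /=; apply/existsP; exists z; rewrite nzz xz.
Qed.

Lemma Ps_mem B : (1 < size (Ps K))%N ->
  (B \in Ps K) = [exists x, goodE EK x && (B == blkE EK x)].
Proof.
move=> h; apply/idP/idP.
- move=> hB; have [B' hB' nB] := other uniq_Ps h hB.
  case/PsP: (hB) => Q qQ [eB ne]; case/set0Pn: (ne) => x xB.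
  case/PsP: (hB') => Q' _ [eB' ne']; case/set0Pn: ne'; rewrite -eB' => z zB'.
  have xB0 : x \in B by rewrite eB.
  case/and3P: (L1 hB hB' (negbT (introF eqP (fun e => (negP nB) (introT eqP (esym e))))) xB0 zB') => xz nxx nzz.
  have gx : goodE EK x by rewrite /goodE nxx /=; apply/existsP; exists z; rewrite nzz xz.
  apply/existsP; exists x; rewrite gx /=.
  have [Q1 q1 [x1 cx e1]] := L2 gx.
  move: xB; rewrite inE => /andP[_ xQ].
  by rewrite e1 eB (owner_uniq cx qQ q1 xQ x1).
- case/existsP => x /andP[gx /eqP ->].
  have [Q1 q1 [x1 cx e1]] := L2 gx.
  by rewrite e1; apply: QinPs x1 cx.
Qed.

End Comb.

Theorem mainTheorem5 (R : realType) (n : nat) (K K' : CMI n) :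
  pure_form K -> pure_form K' ->
  ~ degenerate R K -> ~ degenerate R K' ->
  cmi_equiv R K K' ->
  perm_eq (canP K) (canP K').
Proof.
move=> pK pK' _ _ Heq.
have HE : EK K = EK K'.
  apply: boolp.funext => x; apply: boolp.funext => y.
  have [h1 h2] := Heq (@pS R n [set x; y]) (is_dist_pS _ _).
  rewrite /EK; congr (~~ _); apply/idP/idP => h.
  - by apply/(validE R); apply: h1; apply/(validE R).
  - by apply/(validE R); apply: h2; apply/(validE R).
rewrite (canP_E pK) (canP_E pK') -(TE_size pK) -(TE_size pK') HE.
case: ifP => hT //.
apply: uniq_perm; [exact: uniq_Ps | exact: uniq_Ps |] => B.
rewrite (Ps_mem pK); last by rewrite -(TE_size pK) HE.
rewrite (Ps_mem pK'); first by rewrite HE.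
by rewrite -(TE_size pK').
Qed.
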